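(* Let $A$ be a non-empty set and let $f\in H_0[\ell_1(A)]_+$ be maximal. Then: (i) $f(x^* )\le f(y^* )$ whenever $x^*,y^*\in\ell_\infty(A)$ satisfy $|x^*|\le|y^*|$; (ii) $\sum_{k=1}^n f(x_k^* )\le f(\sum_{k=1}^n x_k^* )$ for every $n\in\mathbb N$ and $x_1^*,\dots,x_n^*\in\ell_\infty(A)_+$; (iii) $\|f\|_{FBL[\ell_1(A)]}=\|f\|_\infty$, where $\|f\|_\infty=\sup\{|f(x^* )|:x^*\in B_{\ell_\infty(A)}\}$.
   Context: Identify $\ell_1(A)^*$ with $\ell_\infty(A)$. $H[\ell_1(A)]$ is the vector space of positively homogeneous functions $f:\ell_\infty(A)\to\mathbb R$ ($f(\lambda x^* )=\lambda f(x^* )$ for $\lambda>0$), ordered pointwise. For $f\in H[\ell_1(A)]$, $\|f\|_{FBL[\ell_1(A)]}:=\sup\{\sum_{k=1}^n|f(x_k^* )| : n\in\mathbb N,\ x_1^*,\dots,x_n^*\in\ell_\infty(A),\ \sup_{a\in A}\sum_{k=1}^n|x_k^*(a)|\le1\}$, and $H_0[\ell_1(A)]=\{f:\|f\|_{FBL[\ell_1(A)]}<\infty\}$, with positive cone $H_0[\ell_1(A)]_+$. An element $f\in H_0[\ell_1(A)]_+$ is maximal if the only $g\in H_0[\ell_1(A)]_+$ with $g\ge f$ and $\|g\|_{FBL[\ell_1(A)]}=\|f\|_{FBL[\ell_1(A)]}$ is $g=f$. *)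

(* Defs.v *)
From HB Require Import structures.
From mathcomp Require Import all_boot all_order all_algebra.
From mathcomp Require Import all_classical all_reals ereal Rstruct.
From Stdlib Require Import Rdefinitions.
Set Implicit Arguments. Unset Strict Implicit. Unset Printing Implicit Defensive.
Import Order.TTheory GRing.Theory Num.Theory.
Local Open Scope ring_scope.

(* ell_infty(A) = ell_1(A)^* : bounded real functions on A *)
Record linf (A : Type) := Linf {
  lval :> A -> R;
  lbd : exists M : R, forall a, `|lval a| <= M }.

Lemma linf_scale_bd (A : Type) (l : R) (x : linf A) :
  exists M : R, forall a, `|l * x a| <= M.
Proof.
case: (lbd x) => M HM; exists (`|l| * M) => a.
by rewrite normrM ler_wpM2l.
Qed.

Definition linf_scale (A : Type) (l : R) (x : linf A) : linf A :=
  Linf (linf_scale_bd l x).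

Lemma linf_sum_bd (A : Type) (xs : seq (linf A)) :
  exists M : R, forall a, `|\sum_(x <- xs) x a| <= M.
Proof.
elim: xs => [|x xs [M HM]].
  by exists 0 => a; rewrite big_nil normr0.
case: (lbd x) => N HN; exists (N + M) => a.
rewrite big_cons; apply: le_trans (ler_normD _ _) _.
exact: lerD.
Qed.

Definition linf_sum (A : Type) (xs : seq (linf A)) : linf A :=
  Linf (linf_sum_bd xs).

(* H[ell_1(A)]: positively homogeneous functions on ell_infty(A) *)
Definition pos_homogeneous (A : Type) (f : linf A -> R) : Prop :=
  forall (l : R) (x : linf A), 0 < l -> f (linf_scale l x) = l * f x.

Definition fbl_norm (A : Type) (f : linf A -> R) : \bar R :=
  ereal_sup [set ((\sum_(x <- xs) `|f x|)%R)%:E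
            | xs in [set xs : seq (linf A) |
                     forall a, (\sum_(x <- xs) `|x a|) <= 1]].

Definition sup_norm (A : Type) (f : linf A -> R) : \bar R :=
  ereal_sup [set `|f x|%:E | x in [set x : linf A | forall a, `|x a| <= 1]].

Definition H0_pos (A : Type) (f : linf A -> R) : Prop :=
  [/\ pos_homogeneous f, (fbl_norm f < +oo)%E & forall x, 0 <= f x].

Definition maximal (A : Type) (f : linf A -> R) : Prop :=
  H0_pos f /\
  forall g : linf A -> R, H0_pos g -> (forall x, f x <= g x) ->
    fbl_norm g = fbl_norm f -> g = f.

(* Main.v *)
Require Import Defs.
From mathcomp Require Import all_boot all_order all_algebra.
From mathcomp Require Import all_classical all_reals ereal Rstruct.
From Stdlib Require Import Rdefinitions.
From mathcomp Require Import lra.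
Import Order.TTheory GRing.Theory Num.Theory.
Local Open Scope ring_scope.

Lemma linf_ext (A : Type) (x y : linf A) : (forall a, x a = y a) -> x = y.
Proof.
case: x y => [x hx] [y hy] /= H.
have E : x = y by apply: funext.
subst; by rewrite (Prop_irrelevance hx hy).
Qed.

Lemma le_fbl (A : Type) (f : linf A -> R) (xs : seq (linf A)) :
  (forall a, \sum_(x <- xs) `|x a| <= 1) -> ((\sum_(x <- xs) `|f x|)%:E <= fbl_norm f)%E.
Proof. by move=> H; apply: ereal_sup_ubound; exists xs. Qed.

Lemma zero_sum (A : Type) (f : linf A -> R) : pos_homogeneous f ->
  forall zs : seq (linf A), (forall a, \sum_(z <- zs) `|z a| <= 0) ->
  \sum_(z <- zs) f z = 0.
Proof.
move=> hom; elim=> [|z zs IH] H; first by rewrite big_nil.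
have Hz : forall a, `|z a| = 0.
  move=> a; have := H a; rewrite big_cons => h.
  apply/eqP; rewrite eq_le normr_ge0 andbT.
  apply: le_trans h; rewrite lerDl; exact: sumr_ge0.
have Hzs : forall a, \sum_(z <- zs) `|z a| <= 0.
  move=> a; have := H a; rewrite big_cons => h.
  apply: le_trans h; rewrite lerDr //.
rewrite big_cons IH // addr0.
have E : linf_scale 2 z = z.
  apply: linf_ext => a /=; have := Hz a; move/eqP; rewrite normr_eq0 => /eqP ->.
  by rewrite mulr0.
have h2 : (0:R) < 2 by rewrite ltr0n.
have := hom 2 z h2; rewrite E => h.
lra.
Qed.

Lemma keyP (A : Type) (f : linf A -> R) : maximal f ->
  forall (x0 : linf A) (zs : seq (linf A)),
  (forall a, \sum_(z <- zs) `|z a| <= `|x0 a|) -> \sum_(z <- zs) f z <= f x0.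
Proof.
move=> [[hom fin pos] maxf] x0 zs Hz.
rewrite leNgt; apply/negP => HS.
set S := \sum_(z <- zs) f z in HS.
have [[a0 Ha0]|Hno] := pselect (exists a0, x0 a0 != 0); last first.
  have : S = 0.
    apply: zero_sum => // a; apply: le_trans (Hz a) _.
    have : x0 a = 0 by apply/eqP; apply: contra_notT Hno => h; exists a.
    by move=> ->; rewrite normr0.
  by move=> E; move: HS; rewrite E ltNge pos.
pose onray (x : linf A) := exists l, 0 < l /\ forall a, x a = l * x0 a.
pose lam (x : linf A) := x a0 / x0 a0.
have lamE : forall (x : linf A) l, (forall a, x a = l * x0 a) -> lam x = l.
  by move=> x l Hx; rewrite /lam Hx mulfK.
have rayE : forall x, onray x -> 0 < lam x /\ x = linf_scale (lam x) x0.
  move=> x [l [lp Hx]]; rewrite (lamE _ _ Hx); split => //.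
  by apply: linf_ext => a; rewrite Hx.
have S0 : 0 <= S by apply: sumr_ge0.
pose g (x : linf A) := if pselect (onray x) then lam x * S else f x.
have gE1 : forall x, onray x -> g x = lam x * S.
  by move=> x Hr; rewrite /g; destruct (pselect (onray x)).
have gE2 : forall x, ~ onray x -> g x = f x.
  by move=> x Hr; rewrite /g; destruct (pselect (onray x)).
have gf : forall x, f x <= g x.
  move=> x; have [Hr|Hr] := pselect (onray x); last by rewrite gE2.
  have [lp E] := rayE x Hr; rewrite gE1 //.
  rewrite {1}E hom // (ler_wpM2l (ltW lp)) //; exact: ltW.
have g0 : forall x, 0 <= g x.
  move=> x; have [Hr|Hr] := pselect (onray x); last by rewrite gE2 // pos.
  have [lp _] := rayE x Hr; rewrite gE1 //.
  exact: mulr_ge0 (ltW lp) S0.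
have homg : pos_homogeneous g.
  move=> l x lp.
  have lamS : lam (linf_scale l x) = l * lam x by rewrite /lam /= mulrA.
  have [[m [mp Hm]]|Hr] := pselect (onray x).
    have Hr' : onray (linf_scale l x).
      by exists (l * m); split; [rewrite mulr_gt0 | move=> a; rewrite /= Hm mulrA].
    by rewrite !gE1 //; [rewrite lamS mulrA | exists m].
  have Hr' : ~ onray (linf_scale l x).
    move=> [m [mp Hm]]; apply: Hr; exists (m / l); split; first by rewrite divr_gt0.
    move=> a; have := Hm a; rewrite /= => h; apply: (mulfI (lt0r_neq0 lp)).
    by rewrite h mulrA mulrCA divff ?lt0r_neq0 // mulr1.
  rewrite !gE2 //; exact: hom.
have le_gf : (fbl_norm g <= fbl_norm f)%E.
  apply: ge_ereal_sup => _ [xs Hxs <-].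
  pose piece (x : linf A) := if pselect (onray x) then [seq linf_scale (lam x) z | z <- zs] else [:: x].
  pose ys := flatten [seq piece x | x <- xs].
  have pE1 : forall x, onray x -> piece x = [seq linf_scale (lam x) z | z <- zs].
    by move=> x Hr; rewrite /piece; destruct (pselect (onray x)).
  have pE2 : forall x, ~ onray x -> piece x = [:: x].
    by move=> x Hr; rewrite /piece; destruct (pselect (onray x)).
  have Hp1 : forall x a, \sum_(y <- piece x) `|y a| <= `|x a|.
    move=> x a; have [Hr|Hr] := pselect (onray x); last by rewrite pE2 // big_seq1.
    have [lp E] := rayE x Hr.
    rewrite pE1 // big_map /=.
    under eq_bigr do rewrite normrM (gtr0_norm lp).
    rewrite -mulr_sumr {2}E /= normrM (gtr0_norm lp).
    by rewrite (ler_wpM2l (ltW lp)).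
  have Hp2 : forall x, \sum_(y <- piece x) `|f y| = `|g x|.
    move=> x; have [Hr|Hr] := pselect (onray x); last by rewrite pE2 // big_seq1 gE2.
    have [lp E] := rayE x Hr.
    rewrite pE1 // gE1 // big_map /= (ger0_norm (mulr_ge0 (ltW lp) S0)) /S mulr_sumr.
    apply: eq_bigr => z _; rewrite hom // ger0_norm //.
    exact: mulr_ge0 (ltW lp) (pos z).
  have := @le_fbl A f ys.
  rewrite /ys !big_flatten !big_map /=.
  under eq_bigr do rewrite Hp2.
  apply => a; apply: le_trans (Hxs a).
  rewrite big_flatten big_map /=; apply: ler_sum => x _; exact: Hp1.
have le_fg : (fbl_norm f <= fbl_norm g)%E.
  apply: ge_ereal_sup => _ [xs Hxs <-].
  apply: le_trans (@le_fbl A g xs Hxs); rewrite lee_fin; apply: ler_sum => x _.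
  by rewrite !ger0_norm.
have Eg : fbl_norm g = fbl_norm f by apply/eqP; rewrite eq_le le_gf le_fg.
have H0g : H0_pos g by split => //; rewrite Eg.
have := maxf g H0g gf Eg => /(congr1 (fun h => h x0)).
have Hr : onray x0 by exists 1; split => // a; rewrite mul1r.
rewrite gE1 // (lamE x0 1); last by move=> a; rewrite mul1r.
rewrite mul1r => E.
by move: HS; rewrite -E ltxx.
Qed.

Theorem lemma4p5 (A : Type) (HA : inhabited A) (f : linf A -> R) :
  maximal f ->
  [/\ (forall x y : linf A, (forall a, `|x a| <= `|y a|) -> f x <= f y),
      (forall xs : seq (linf A), (forall x, List.In x xs -> forall a, 0 <= x a) ->
         \sum_(x <- xs) f x <= f (linf_sum xs))
    & fbl_norm f = sup_norm f].
Proof.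
move=> Hm; have [[hom fin pos] _] := Hm; have P := @keyP A f Hm.
split.
- move=> x y Hxy; have := P y [:: x]; rewrite !big_seq1; apply => a.
  by rewrite big_seq1; exact: Hxy.
- move=> xs Hpos; apply: P => a /=.
  have -> : \sum_(x <- xs) `|x a| = \sum_(x <- xs) x a.
    elim: xs Hpos => [|x xs IH] H; first by rewrite !big_nil.
    rewrite !big_cons ger0_norm; last by apply: H; left.
    by rewrite IH // => y Hy; apply: H; right.
  exact: ler_norm.
- apply/eqP; rewrite eq_le; apply/andP; split.
  + apply: ge_ereal_sup => _ [xs Hxs <-].
    have ub : exists M : R, forall a, `| \sum_(x <- xs) `|x a| | <= M.
      by exists 1 => a; rewrite ger0_norm ?sumr_ge0 // => x _; exact: normr_ge0.
    pose u := Linf ub.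
    have Hu : forall a, `|u a| = \sum_(x <- xs) `|x a|.
      by move=> a; rewrite /= ger0_norm ?sumr_ge0 // => x _; exact: normr_ge0.
    have := P u xs (fun a => ltac:(by rewrite Hu)) => h.
    apply: (@le_trans _ _ (`|f u|)%:E).
      rewrite lee_fin; under eq_bigr do rewrite ger0_norm ?pos //.
      by rewrite ger0_norm ?pos.
    by apply: ereal_sup_ubound; exists u => // a; rewrite Hu.
  + apply: ge_ereal_sup => _ [x Hx <-].
    apply: le_trans (@le_fbl A f [:: x] _); first by rewrite big_seq1.
    by move=> a; rewrite big_seq1; exact: Hx.
Qed.
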